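(* Let $Y$ be a complete CAT$(0)$ space, let $C_1, C_2 \subseteq Y$ be nonempty, closed and convex, and let $r_1,r_2>0$. If there exists $z \in Y$ such that $C_1, C_2 \subseteq B(z,r_1)$, then for any $x \in B(z,r_2)$, \[d(P_{C_1}(x), P_{C_2}(x))^2 \le 2(r_1 + r_2)H(C_1,C_2).\]
   Context: A CAT$(0)$ space is a geodesic space in which every geodesic triangle is no fatter than its Euclidean comparison triangle. A subset is convex if it contains every geodesic segment joining two of its points. $B(z,r)$ is the closed ball. For nonempty closed convex $C$ in a complete CAT$(0)$ space, $P_C(x)$ denotes the unique point of $C$ nearest to $x$ (metric projection). $H(B,C)=\max\{\sup_{b\in B}\mathrm{dist}(b,C),\sup_{c\in C}\mathrm{dist}(c,B)\}$ is the Pompeiu–Hausdorff distance. *)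

(* Defs.v *)
From Stdlib Require Import Reals List.
From Coquelicot Require Import Coquelicot.
Open Scope R_scope.

Section Metric.
Context {X : Type} (d : X -> X -> R).

Definition is_metric : Prop :=
  (forall x y, 0 <= d x y) /\ (forall x y, d x y = 0 <-> x = y) /\
  (forall x y, d x y = d y x) /\ (forall x y z, d x z <= d x y + d y z).

Definition geodesic_seg (x y : X) (g : R -> X) : Prop :=
  g 0 = x /\ g (d x y) = y /\
  forall s t, 0 <= s <= d x y -> 0 <= t <= d x y -> d (g s) (g t) = Rabs (s - t).

Definition geodesic_space : Prop := forall x y, exists g, geodesic_seg x y g.

Definition edist (a b : R * R) : R :=
  sqrt ((fst a - fst b) ^ 2 + (snd a - snd b) ^ 2).

(** a side of a geodesic triangle together with its comparison side:
    endpoints u v, geodesic g, comparison endpoints a b in R^2 *)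
Record side := mkSide { s_u : X; s_v : X; s_g : R -> X; s_a : R * R; s_b : R * R }.

(** comparison point in R^2 of the point (s_g S t) of the side S *)
Definition cmp_point (S : side) (t : R) : R * R :=
  (fst (s_a S) + t / d (s_u S) (s_v S) * (fst (s_b S) - fst (s_a S)),
   snd (s_a S) + t / d (s_u S) (s_v S) * (snd (s_b S) - snd (s_a S))).

Definition CAT0 : Prop :=
  geodesic_space /\
  forall (x y z : X) (gxy gyz gzx : R -> X) (a b c : R * R),
    geodesic_seg x y gxy -> geodesic_seg y z gyz -> geodesic_seg z x gzx ->
    edist a b = d x y -> edist b c = d y z -> edist c a = d z x ->
    forall S1 S2 : side,
      In S1 (mkSide x y gxy a b :: mkSide y z gyz b c :: mkSide z x gzx c a :: nil) ->
      In S2 (mkSide x y gxy a b :: mkSide y z gyz b c :: mkSide z x gzx c a :: nil) ->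
      forall s t, 0 <= s <= d (s_u S1) (s_v S1) -> 0 <= t <= d (s_u S2) (s_v S2) ->
        d (s_g S1 s) (s_g S2 t) <= edist (cmp_point S1 s) (cmp_point S2 t).

Definition metric_complete : Prop :=
  forall u : nat -> X,
    (forall eps, 0 < eps -> exists N, forall m n, (N <= m)%nat -> (N <= n)%nat ->
        d (u m) (u n) < eps) ->
    exists l, forall eps, 0 < eps -> exists N, forall n, (N <= n)%nat -> d (u n) l < eps.

Definition nonempty_set (C : X -> Prop) : Prop := exists c, C c.

Definition m_closed_set (C : X -> Prop) : Prop :=
  forall x, (forall eps, 0 < eps -> exists c, C c /\ d x c < eps) -> C x.

Definition g_convex_set (C : X -> Prop) : Prop :=
  forall x y g, C x -> C y -> geodesic_seg x y g ->
    forall t, 0 <= t <= d x y -> C (g t).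

Definition cball (z : X) (r : R) : X -> Prop := fun x => d z x <= r.

(** p is the metric projection P_C(x): a point of C nearest to x
    (unique in a complete CAT(0) space) *)
Definition is_proj (C : X -> Prop) (x p : X) : Prop :=
  C p /\ forall c, C c -> d x p <= d x c.

Definition dist_set (x : X) (C : X -> Prop) : Rbar :=
  Glb_Rbar (fun r => exists c, C c /\ r = d x c).

Definition Rbar_max2 (a b : Rbar) : Rbar :=
  match Rbar_le_dec a b with left _ => b | right _ => a end.

Definition hausdorff (B C : X -> Prop) : Rbar :=
  Rbar_max2 (Lub_Rbar (fun r => exists b, B b /\ Finite r = dist_set b C))
            (Lub_Rbar (fun r => exists c, C c /\ Finite r = dist_set c B)).

End Metric.

(* Main.v *)
Require Import Defs.
From Stdlib Require Import Reals Lra Psatz List.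
From Coquelicot Require Import Coquelicot.
Open Scope R_scope.

Lemma sqrt_sq_eq (x : R) : 0 <= x -> sqrt (x ^ 2) = x.
Proof. intros; apply sqrt_pow2; lra. Qed.

Lemma CN (Y : Type) (d : Y -> Y -> R) u v g p t :
  is_metric d -> CAT0 d -> geodesic_seg d u v g -> 0 < d u v -> 0 <= t <= d u v ->
  d p (g t) ^ 2 <= (1 - t / d u v) * d p u ^ 2 + (t / d u v) * d p v ^ 2
                   - (t / d u v) * (1 - t / d u v) * d u v ^ 2.
Proof.
  intros [Hpos [Hz [Hs Ht]]] [Hgeo Hcat] Hg HD Htr.
  destruct (Hgeo v p) as [gvp Hvp]. destruct (Hgeo p u) as [gpu Hpu].
  set (D := d u v) in *. set (A := d p u). set (B := d p v).
  assert (HA : 0 <= A) by apply Hpos. assert (HB : 0 <= B) by apply Hpos.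
  assert (T1 : B <= A + D) by (unfold A, B, D; apply Ht).
  assert (T2 : A <= B + D) by (unfold A, B, D; rewrite <- (Hs v u); apply Ht).
  assert (T3 : D <= A + B) by (unfold A, B, D; rewrite <- (Hs u p); apply Ht).
  set (X := (D^2 + A^2 - B^2) / (2 * D)).
  assert (HXA : 0 <= A^2 - X^2).
  { assert (E : A^2 - X^2 = ((B^2 - (A-D)^2) * ((A+D)^2 - B^2)) / (4 * D^2)).
    { unfold X; field; lra. }
    rewrite E. apply Rmult_le_pos.
    - apply Rmult_le_pos; nra.
    - apply Rlt_le, Rinv_0_lt_compat; nra. }
  set (Yc := sqrt (A^2 - X^2)).
  assert (HY : Yc * Yc = A^2 - X^2) by (apply sqrt_sqrt; lra).
  specialize (Hcat u v p g gvp gpu (0,0) (D,0) (X,Yc) Hg Hvp Hpu).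
  assert (E1 : edist (0,0) (D,0) = d u v).
  { unfold edist; simpl. replace ((0 - D) * ((0 - D) * 1) + (0 - 0) * ((0 - 0) * 1)) with (D^2) by ring.
    rewrite sqrt_sq_eq; [reflexivity|lra]. }
  assert (E2 : edist (D,0) (X,Yc) = d v p).
  { unfold edist; simpl.
    assert (Q : (D - X) * ((D - X) * 1) + (0 - Yc) * ((0 - Yc) * 1) = B^2).
    { replace ((0 - Yc) * ((0 - Yc) * 1)) with (Yc * Yc) by ring. rewrite HY. unfold X; field; lra. }
    rewrite Q, sqrt_sq_eq by lra. unfold B; apply Hs. }
  assert (E3 : edist (X,Yc) (0,0) = d p u).
  { unfold edist; simpl.
    assert (Q : (X - 0) * ((X - 0) * 1) + (Yc - 0) * ((Yc - 0) * 1) = A^2).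
    { replace ((Yc - 0) * ((Yc - 0) * 1)) with (Yc * Yc) by ring. rewrite HY. ring. }
    rewrite Q, sqrt_sq_eq by lra. reflexivity. }
  specialize (Hcat E1 E2 E3 (mkSide u v g (0,0) (D,0)) (mkSide p u gpu (X,Yc) (0,0))
     ltac:(simpl; auto) ltac:(simpl; auto) t 0 ltac:(simpl; exact Htr) ltac:(simpl; split; [lra| apply Hpos])).
  simpl in Hcat. destruct Hpu as [Hpu0 _]. rewrite Hpu0 in Hcat.
  unfold edist, cmp_point in Hcat; simpl in Hcat.
  set (S := (0 + t / D * (D - 0) - (X + 0 / A * (0 - X))) *
           ((0 + t / D * (D - 0) - (X + 0 / A * (0 - X))) * 1) +
           (0 + t / D * (0 - 0) - (Yc + 0 / A * (0 - Yc))) *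
           ((0 + t / D * (0 - 0) - (Yc + 0 / A * (0 - Yc))) * 1)) in Hcat.
  assert (ES : S = (1 - t / D) * A ^ 2 + (t / D) * B ^ 2 - (t / D) * (1 - t / D) * D ^ 2).
  { unfold S. replace (0 / A) with 0 by (unfold Rdiv; ring).
    replace ((0 + t / D * (0 - 0) - (Yc + 0 * (0 - Yc))) * ((0 + t / D * (0 - 0) - (Yc + 0 * (0 - Yc))) * 1)) with (Yc * Yc) by ring.
    rewrite HY. unfold X. field. lra. }
  rewrite <- ES. rewrite Hs.
  assert (HS : 0 <= S) by (unfold S; rewrite !Rmult_1_r; apply Rplus_le_le_0_compat; apply Rle_0_sqr).
  assert (H0 : 0 <= d (g t) p) by apply Hpos.
  rewrite <- (sqrt_sqrt S HS). simpl. rewrite Rmult_1_r.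
  apply Rmult_le_compat; auto.
Qed.

Lemma weak4 (Y : Type) (d : Y -> Y -> R) a b c e :
  is_metric d -> CAT0 d ->
  d a e ^ 2 + d b c ^ 2 <= d a c ^ 2 + d b e ^ 2 + d a b ^ 2 + d c e ^ 2.
Proof.
  intros Hm Hc. pose proof Hm as [Hpos [Hz [Hs Ht]]].
  pose proof (Hpos a e) as H0.
  destruct (Req_dec (d a e) 0) as [E|E].
  - apply Hz in E. subst e.
    pose proof (Ht b a c). pose proof (Hpos b c). pose proof (Hpos b a). pose proof (Hpos a c).
    rewrite (Hs c a). rewrite (Hs b a) in *. rewrite (proj2 (Hz a a) eq_refl). pose proof (Rmult_le_compat _ _ _ _ H1 H1 H H). pose proof (pow2_ge_0 (d a b - d a c)). simpl in *. lra.
  - destruct (proj1 Hc a e) as [g Hg].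
    assert (HD : 0 < d a e) by lra.
    assert (Hm2 : 0 <= d a e / 2 <= d a e) by lra.
    pose proof (CN Y d a e g c (d a e / 2) Hm Hc Hg HD Hm2) as C1.
    pose proof (CN Y d a e g b (d a e / 2) Hm Hc Hg HD Hm2) as C2.
    replace (d a e / 2 / d a e) with (1/2) in C1, C2 by (field; lra).
    set (m := g (d a e / 2)) in *.
    pose proof (Ht b m c) as T. pose proof (Hpos b m) as P1. pose proof (Hpos m c) as P2.
    pose proof (Hpos b c) as P3.
    rewrite (Hs c a), (Hs c m) in C1. rewrite (Hs b a) in C2.
    pose proof (Rmult_le_compat _ _ _ _ P3 P3 T T).
    pose proof (pow2_ge_0 (d b m - d m c)).
    simpl in *. lra.
Qed.

Lemma obtuse (Y : Type) (d : Y -> Y -> R) (C : Y -> Prop) y p c :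
  is_metric d -> CAT0 d -> g_convex_set d C -> C p -> C c ->
  (forall c', C c' -> d y p <= d y c') ->
  d y p ^ 2 + d p c ^ 2 <= d y c ^ 2.
Proof.
  intros Hm Hc Hconv Hp Hcc Hproj. pose proof Hm as [Hpos [Hz [Hs Ht]]].
  destruct (Req_dec (d p c) 0) as [E|E].
  - rewrite E. apply Hz in E. subst c. lra.
  - pose proof (Hpos p c). assert (HD : 0 < d p c) by lra.
    destruct (proj1 Hc p c) as [g Hg].
    destruct (Rle_or_lt (d y p^2 + d p c^2) (d y c^2)) as [Hle|Hlt]; [exact Hle|exfalso].
    assert (Hgap : 0 < d y p^2 + d p c^2 - d y c^2) by lra.
    remember ((d y p^2 + d p c^2 - d y c^2) / (d y p^2 + d p c^2 - d y c^2 + 2 * d p c^2)) as lam eqn:Hlam.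
    assert (Hl0 : 0 < lam) by (rewrite Hlam; apply Rdiv_lt_0_compat; nra).
    assert (Hl1 : lam < 1).
    { rewrite Hlam. assert (Hden : 0 < d y p^2 + d p c^2 - d y c^2 + 2 * d p c^2) by nra.
      apply (Rmult_lt_reg_r _ _ _ Hden). unfold Rdiv. rewrite Rmult_assoc, Rinv_l by lra. nra. }
    assert (Hk3 : lam * d p c^2 * (d y p^2 + d p c^2 - d y c^2 + 2 * d p c^2) = (d y p^2 + d p c^2 - d y c^2) * d p c^2)
      by (rewrite Hlam; field; nra).
    clear Hlam.
    assert (Ht' : 0 <= lam * d p c <= d p c) by (split; nra).
    pose proof (CN Y d p c g y (lam * d p c) Hm Hc Hg HD Ht') as Hcn.
    replace (lam * d p c / d p c) with lam in Hcn by (field; lra).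
    assert (HC : C (g (lam * d p c))) by (apply (Hconv p c g); auto).
    pose proof (Hproj _ HC) as Hpr.
    assert (HA : 0 <= d y p) by apply Hpos.
    assert (Hsq : d y p ^ 2 <= d y (g (lam * d p c)) ^ 2) by nra.
    assert (Hk : lam * (d y p^2 + d p c^2 - d y c^2) <= lam * (lam * d p c^2)) by nra.
    assert (Hk2 : d y p^2 + d p c^2 - d y c^2 <= lam * d p c^2) by (apply Rmult_le_reg_l with lam; auto).
    nra.
Qed.

Lemma key (Y : Type) (d : Y -> Y -> R) (C : Y -> Prop) x p w q :
  is_metric d -> CAT0 d -> g_convex_set d C -> is_proj d C x p -> C q ->
  d x p ^ 2 + d p w ^ 2 - d x w ^ 2 <= 2 * d x p * d w q.
Proof.
  intros Hm Hc Hconv [Hp Hmin] Hq. pose proof Hm as [Hpos [Hz [Hs Ht]]].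
  assert (Hzz : forall u, d u u = 0) by (intro u; apply Hz; reflexivity).
  destruct (Req_dec (d x p) 0) as [Ea|Ea].
  { apply Hz in Ea. subst x. rewrite Hzz. simpl. lra. }
  destruct (Req_dec (d w q) 0) as [Eh|Eh].
  { apply Hz in Eh. subst w. rewrite Hzz.
    pose proof (obtuse Y d C x p q Hm Hc Hconv Hp Hq Hmin). lra. }
  pose proof (Hpos x p). pose proof (Hpos w q).
  assert (Ha : 0 < d x p) by lra. assert (Hh : 0 < d w q) by lra.
  remember (d x p) as a eqn:Hadef. remember (d w q) as h eqn:Hhdef.
  destruct (archimed_cor1 (a / h)) as [N [HN1 HN0]].
  { apply Rdiv_lt_0_compat; lra. }
  assert (HNp : 0 < INR N) by (apply lt_0_INR; exact HN0).
  remember (h / INR N) as s eqn:Hsdef.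
  assert (Hs0 : 0 < s) by (rewrite Hsdef; apply Rdiv_lt_0_compat; lra).
  assert (Hsa : s < a).
  { rewrite Hsdef. unfold Rdiv. apply (Rmult_lt_compat_l h) in HN1; [|lra].
    replace (h * (a / h)) with a in HN1 by (field; lra). lra. }
  assert (HNs : INR N * s = h) by (rewrite Hsdef; field; lra).
  destruct (proj1 Hc p x) as [gx [Hgx0 [Hgxa Hgxi]]].
  assert (Hpx : d p x = a) by (rewrite Hs; auto).
  assert (Hg : geodesic_seg d p x gx) by (repeat split; auto).
  set (y := gx s).
  assert (Hpy : d p y = s).
  { unfold y. rewrite <- Hgx0 at 1. rewrite Hgxi by lra. rewrite Rabs_left by lra. ring. }
  assert (Hyx : d y x = a - s).
  { unfold y. rewrite <- Hgxa at 1. rewrite Hgxi by lra. rewrite Rabs_left by lra. lra. }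
  assert (Hymin : forall c, C c -> d y p <= d y c).
  { intros c Hcc. pose proof (Hmin c Hcc). pose proof (Ht x y c).
    rewrite (Hs y p), Hpy. rewrite (Hs x y), Hyx in *. lra. }
  pose proof (obtuse Y d C y p q Hm Hc Hconv Hp Hq Hymin) as Hob.
  rewrite (Hs y p), Hpy in Hob.
  destruct (proj1 Hc q w) as [gw [Hgw0 [Hgwh Hgwi]]].
  assert (Hqw : d q w = h) by (rewrite Hs; auto).
  rewrite Hqw in Hgwh, Hgwi.
  assert (Hchain : forall n, (n <= N)%nat ->
     (d y q ^ 2 - d p q ^ 2) - (d y (gw (INR n * s)) ^ 2 - d p (gw (INR n * s)) ^ 2)
       <= INR n * (2 * s ^ 2)).
  { induction n as [|n IH]; intros Hn.
    - simpl. rewrite Rmult_0_l, Hgw0. lra.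
    - assert (Hn' : (n <= N)%nat) by lia. specialize (IH Hn').
      pose proof (le_INR _ _ Hn) as Hle. rewrite S_INR in Hle |- *.
      pose proof (pos_INR n) as Hn0.
      pose proof (weak4 Y d p y (gw (INR n * s)) (gw ((INR n + 1) * s)) Hm Hc) as W.
      rewrite Hpy in W.
      rewrite Hgwi in W.
      2: split; nra.
      2: split; nra.
      replace (Rabs (INR n * s - (INR n + 1) * s)) with s in W.
      2: { rewrite Rabs_left by nra. ring. }
      nra. }
  specialize (Hchain N (le_n N)). rewrite HNs, Hgwh in Hchain.
  assert (Hst : 0 <= s <= d p x) by lra.
  assert (Hpx0 : 0 < d p x) by lra.
  pose proof (CN Y d p x gx w s Hm Hc Hg Hpx0 Hst) as Hcn.
  fold y in Hcn. rewrite Hpx in Hcn.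
  rewrite (Hs w y), (Hs w p), (Hs w x) in Hcn.
  remember (s / a) as lam eqn:Hlam.
  assert (Hsl : s = lam * a) by (rewrite Hlam; field; lra).
  assert (Hl0 : 0 < lam) by (rewrite Hlam; apply Rdiv_lt_0_compat; lra).
  clear Hlam. subst s.
  apply (Rmult_le_reg_l lam); auto.
  assert (E : INR N * (2 * (h / INR N) ^ 2) = 2 * h * (lam * a)) by (rewrite <- Hsl; field; lra).
  rewrite E in Hchain. rewrite Hsl in Hob. clearbody y.
  nra.
Qed.

Lemma dist_fin (Y : Type) (d : Y -> Y -> R) (C : Y -> Prop) u c0 :
  is_metric d -> C c0 ->
  exists e, dist_set d u C = Finite e /\ 0 <= e /\
    (forall c, C c -> e <= d u c) /\
    (forall m, (forall c, C c -> m <= d u c) -> m <= e).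
Proof.
  intros [Hpos _] Hc0. unfold dist_set.
  destruct (Glb_Rbar_correct (fun r => exists c, C c /\ r = d u c)) as [Hlb Hgr].
  assert (L0 : Rbar_le 0 (Glb_Rbar (fun r => exists c, C c /\ r = d u c))).
  { apply Hgr. intros r [c [_ ->]]. simpl. apply Hpos. }
  assert (L1 : Rbar_le (Glb_Rbar (fun r => exists c, C c /\ r = d u c)) (d u c0)).
  { apply Hlb. exists c0; auto. }
  destruct (Glb_Rbar (fun r => exists c, C c /\ r = d u c)) as [e| |] eqn:EG;
    simpl in L0, L1; try contradiction.
  exists e. split; [reflexivity|]. split; [exact L0|]. split.
  - intros c Hc. specialize (Hlb (d u c) (ex_intro _ c (conj Hc eq_refl))). exact Hlb.
  - intros m Hm. specialize (Hgr (Finite m)).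
    assert (Hl : is_lb_Rbar (fun r => exists c, C c /\ r = d u c) (Finite m)).
    { intros r [c [Hc ->]]. simpl. auto. }
    exact (Hgr Hl).
Qed.

Theorem lemma4p2 (Y : Type) (d : Y -> Y -> R) (C1 C2 : Y -> Prop) (r1 r2 : R) :
  is_metric d -> CAT0 d -> metric_complete d ->
  nonempty_set C1 -> m_closed_set d C1 -> g_convex_set d C1 ->
  nonempty_set C2 -> m_closed_set d C2 -> g_convex_set d C2 ->
  0 < r1 -> 0 < r2 ->
  forall z : Y,
    (forall c, C1 c -> cball d z r1 c) -> (forall c, C2 c -> cball d z r1 c) ->
    forall x p1 p2 : Y,
      cball d z r2 x -> is_proj d C1 x p1 -> is_proj d C2 x p2 ->
      Rbar_le (Finite (d p1 p2 ^ 2))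
              (Rbar_mult (Finite (2 * (r1 + r2))) (hausdorff d C1 C2)).
Proof.
  intros Hm Hc _ _ _ Hcv1 _ _ Hcv2 Hr1 Hr2 z Hb1 Hb2 x p1 p2 Hx Hp1 Hp2.
  pose proof Hm as [Hpos [Hz [Hs Ht]]].
  assert (Ha : d x p1 <= r1 + r2).
  { pose proof (Ht x z p1). pose proof (Hb1 p1 (proj1 Hp1)). unfold cball in *.
    rewrite (Hs x z) in *. lra. }
  assert (Hb : d x p2 <= r1 + r2).
  { pose proof (Ht x z p2). pose proof (Hb2 p2 (proj1 Hp2)). unfold cball in *.
    rewrite (Hs x z) in *. lra. }
  assert (Hmain : forall q q', C1 q -> C2 q' ->
            d p1 p2 ^ 2 <= (r1 + r2) * (d p2 q + d p1 q')).
  { intros q q' Hq Hq'.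
    pose proof (key Y d C1 x p1 p2 q Hm Hc Hcv1 Hp1 Hq) as K1.
    pose proof (key Y d C2 x p2 p1 q' Hm Hc Hcv2 Hp2 Hq') as K2.
    rewrite (Hs p2 p1) in K2.
    pose proof (Hpos p2 q). pose proof (Hpos p1 q'). pose proof (Hpos x p1). pose proof (Hpos x p2).
    nra. }
  destruct (dist_fin Y d C1 p2 p1 Hm (proj1 Hp1)) as [e1 [E1 [He1 [Hl1 Hg1]]]].
  destruct (dist_fin Y d C2 p1 p2 Hm (proj1 Hp2)) as [e2 [E2 [He2 [Hl2 Hg2]]]].
  assert (Hr : 0 < r1 + r2) by lra.
  assert (Hsum : d p1 p2 ^ 2 <= (r1 + r2) * (e1 + e2)).
  { assert (S1 : forall q', C2 q' -> d p1 p2 ^ 2 / (r1 + r2) - e1 <= d p1 q').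
    { intros q' Hq'.
      assert (d p1 p2 ^ 2 / (r1 + r2) - d p1 q' <= e1).
      { apply Hg1. intros c Hcc. pose proof (Hmain c q' Hcc Hq').
        apply (Rmult_le_reg_l (r1 + r2)); auto.
        replace ((r1 + r2) * (d p1 p2 ^ 2 / (r1 + r2) - d p1 q')) with
          (d p1 p2 ^ 2 - (r1 + r2) * d p1 q') by (field; lra). nra. }
      lra. }
    pose proof (Hg2 _ S1) as S2.
    assert (d p1 p2 ^ 2 / (r1 + r2) <= e1 + e2) by lra.
    apply (Rmult_le_compat_l (r1 + r2)) in H; [|lra].
    replace ((r1 + r2) * (d p1 p2 ^ 2 / (r1 + r2))) with (d p1 p2 ^ 2) in H by (field; lra).
    exact H. }
  set (L1 := Lub_Rbar (fun r => exists b, C1 b /\ Finite r = dist_set d b C2)).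
  set (L2 := Lub_Rbar (fun r => exists c, C2 c /\ Finite r = dist_set d c C1)).
  assert (HL1 : Rbar_le e2 L1).
  { destruct (Lub_Rbar_correct (fun r => exists b, C1 b /\ Finite r = dist_set d b C2)) as [Hub _].
    apply Hub. exists p1. split; [exact (proj1 Hp1)| symmetry; exact E2]. }
  assert (HL2 : Rbar_le e1 L2).
  { destruct (Lub_Rbar_correct (fun r => exists c, C2 c /\ Finite r = dist_set d c C1)) as [Hub _].
    apply Hub. exists p2. split; [exact (proj1 Hp2)| symmetry; exact E1]. }
  assert (HH : Rbar_le e1 (hausdorff d C1 C2) /\ Rbar_le e2 (hausdorff d C1 C2)).
  { unfold hausdorff. fold L1 L2. unfold Rbar_max2.
    destruct (Rbar_le_dec L1 L2) as [Hle|Hnle].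
    - split; auto. eapply Rbar_le_trans; eauto.
    - apply Rbar_not_le_lt in Hnle. split; auto.
      eapply Rbar_le_trans; [exact HL2|]. apply Rbar_lt_le; exact Hnle. }
  destruct HH as [H1 H2].
  destruct (hausdorff d C1 C2) as [hv| |]; simpl in H1, H2; try contradiction.
  - simpl. nra.
  - unfold Rbar_mult, Rbar_mult'. destruct (Rle_dec 0 (2 * (r1 + r2))) as [P|P]; [|lra].
    destruct (Rle_lt_or_eq_dec 0 (2 * (r1 + r2)) P) as [P'|P']; simpl; [trivial|lra].
Qed.
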